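(* Let $\mathbb M=(V,d)$ be a binary structure and $A\subseteq V$. Then $A$ is a robust module of $\mathbb M$ with at least two elements if and only if $A$ is a non-limit module of $\mathbb M$.
   Context: A binary structure over a set $W$ is a pair $\mathbb M=(V,d)$ with $d:V\times V\to W$. A module of $\mathbb M$ is a set $A\subseteq V$ such that $d(x,y)=d(x,y')$ and $d(y,x)=d(y',x)$ for all $x\in V\setminus A$ and $y,y'\in A$. A module is strong if for every module $B$, either $A\subseteq B$, $B\subseteq A$, or $A\cap B=\emptyset$. For $X\subseteq V$, $S_{\mathbb M}(X)$ is the intersection of all strong modules containing $X$. A module is robust if it is a singleton or equals $S_{\mathbb M}(\{x,y\})$ for some distinct $x,y\in V$. A module $I$ is non-limit if it is strong and contains a non-empty strong module $J\neq I$ which is maximal among the strong modules contained in $I$ and distinct from $I$. *)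

(* Defs.v *)
Definition set_sub {V : Type} (A B : V -> Prop) : Prop := forall v, A v -> B v.
Definition set_eq {V : Type} (A B : V -> Prop) : Prop := forall v, A v <-> B v.

Definition is_module {V W : Type} (d : V -> V -> W) (A : V -> Prop) : Prop :=
  forall x y y', ~ A x -> A y -> A y' -> d x y = d x y' /\ d y x = d y' x.

Definition strong_module {V W : Type} (d : V -> V -> W) (A : V -> Prop) : Prop :=
  is_module d A /\
  forall B, is_module d B ->
    set_sub A B \/ set_sub B A \/ (forall v, ~ (A v /\ B v)).

Definition S_M {V W : Type} (d : V -> V -> W) (X : V -> Prop) : V -> Prop :=
  fun v => forall B, strong_module d B -> set_sub X B -> B v.

Definition robust_module {V W : Type} (d : V -> V -> W) (A : V -> Prop) : Prop :=
  is_module d A /\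
  ((exists x, set_eq A (fun v => v = x)) \/
   (exists x y, x <> y /\ set_eq A (S_M d (fun v => v = x \/ v = y)))).

Definition non_limit_module {V W : Type} (d : V -> V -> W) (I : V -> Prop) : Prop :=
  strong_module d I /\
  exists J, strong_module d J /\ set_sub J I /\ ~ set_eq J I /\ (exists j, J j) /\
    (forall K, strong_module d K -> set_sub K I -> ~ set_eq K I ->
       set_sub J K -> set_eq K J).

(* Main.v *)
Require Import Defs.
From Stdlib Require Import Classical.

Section S.
Context {V W : Type} (d : V -> V -> W).

Lemma strong_ext (A B : V -> Prop) : set_eq A B -> strong_module d A -> strong_module d B.
Proof.
  intros E [HM HS]. split.
  - intros x y y' nx hy hy'. apply HM; [intro h; apply nx, E, h|apply E|apply E]; auto.
  - intros C HC. destruct (HS C HC) as [H|[H|H]].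
    + left. intros v hv. apply H, E, hv.
    + right; left. intros v hv. apply E, H, hv.
    + right; right. intros v [h1 h2]. apply (H v). split; [apply E|]; auto.
Qed.

Lemma SM_strong (X : V -> Prop) : strong_module d (S_M d X).
Proof.
  split.
  - intros x y y' nx hy hy'.
    apply not_all_ex_not in nx. destruct nx as [B nB].
    apply imply_to_and in nB. destruct nB as [sB nB].
    apply imply_to_and in nB. destruct nB as [XB nB].
    apply (proj1 sB); [exact nB|apply hy; auto|apply hy'; auto].
  - intros B HB.
    destruct (classic (set_sub B (S_M d X))) as [h|h]; [right; left; exact h|].
    destruct (classic (exists v, S_M d X v /\ B v)) as [[z [zS zB]]|h2].
    + left. unfold set_sub in h. apply not_all_ex_not in h. destruct h as [w hw].
      apply imply_to_and in hw. destruct hw as [wB wS].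
      apply not_all_ex_not in wS. destruct wS as [C nC].
      apply imply_to_and in nC. destruct nC as [sC nC].
      apply imply_to_and in nC. destruct nC as [XC nC].
      intros v hv.
      destruct (proj2 sC B HB) as [H|[H|H]].
      * apply H, hv; auto.
      * exfalso. apply nC, H, wB.
      * exfalso. apply (H z). split; [apply zS|]; auto.
    + right; right. intros v hv. apply h2. exists v. exact hv.
Qed.

Lemma single_strong (x : V) : strong_module d (fun v => v = x).
Proof.
  split.
  - intros u y y' _ -> ->. auto.
  - intros B _. destruct (classic (B x)) as [h|h].
    + left. intros v ->. exact h.
    + right; right. intros v [-> h']. auto.
Qed.

End S.

Theorem proposition6p5 (V W : Type) (d : V -> V -> W) (A : V -> Prop) :
  (robust_module d A /\ exists x y, x <> y /\ A x /\ A y) <-> non_limit_module d A.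
Proof.
  split.
  - intros [[HM [[x Hx]|[x [y [nxy E]]]]] [a [b [nab [ha hb]]]]].
    + exfalso. apply nab. rewrite (proj1 (Hx a) ha), (proj1 (Hx b) hb). reflexivity.
    + assert (SA : strong_module d A).
      { apply (strong_ext d (S_M d (fun v => v = x \/ v = y))).
        - intros v. split; apply E.
        - apply SM_strong. }
      assert (xA : A x). { apply E. intros B _ h. apply h. auto. }
      assert (yA : A y). { apply E. intros B _ h. apply h. auto. }
      split; [exact SA|].
      set (J := fun v => exists K, strong_module d K /\ K x /\ set_sub K A /\ ~ K y /\ K v).
      assert (Jin : forall K v, strong_module d K -> K x -> set_sub K A -> ~ K y -> K v -> J v).
      { intros K v a1 b1 c1 e1 f1. exists K. exact (conj a1 (conj b1 (conj c1 (conj e1 f1)))). }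
      assert (Jx : J x).
      { exists (fun v => v = x). split; [apply single_strong|].
        split; [reflexivity|]. split; [intros v ->; exact xA|].
        split; [intro h; apply nxy; symmetry; exact h|reflexivity]. }
      assert (Jsub : set_sub J A). { intros v [K [_ [_ [h [_ hv]]]]]. apply h, hv. }
      assert (Jy : ~ J y). { intros [K [_ [_ [_ [h h']]]]]. auto. }
      exists J. split; [|split; [exact Jsub|split; [|split]]].
      * split.
        -- intros u v v' nu [K1 [s1 [x1 [a1 [y1 v1]]]]] [K2 [s2 [x2 [a2 [y2 v2]]]]].
           assert (u1 : ~ K1 u). { intro h. apply nu. exact (Jin K1 u s1 x1 a1 y1 h). }
           assert (u2 : ~ K2 u). { intro h. apply nu. exact (Jin K2 u s2 x2 a2 y2 h). }
           destruct (proj1 s1 u v x u1 v1 x1) as [e1 e2].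
           destruct (proj1 s2 u x v' u2 x2 v2) as [e3 e4].
           split; congruence.
        -- intros B HB.
           destruct (classic (set_sub B J)) as [h|h]; [right; left; exact h|].
           destruct (classic (exists v, J v /\ B v)) as [[z [zJ zB]]|h2].
           ++ left. unfold set_sub in h. apply not_all_ex_not in h. destruct h as [w hw].
              apply imply_to_and in hw. destruct hw as [wB wJ].
              assert (xB : B x).
              { destruct zJ as [K0 [s0 [x0 [a0 [y0 z0]]]]].
                destruct (proj2 s0 B HB) as [H|[H|H]].
                - apply H, x0.
                - exfalso. apply wJ. exact (Jin K0 w s0 x0 a0 y0 (H w wB)).
                - exfalso. apply (H z). auto. }
              intros v [K [sK [xK [aK [yK vK]]]]].
              destruct (proj2 sK B HB) as [H|[H|H]].
              ** apply H, vK.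
              ** exfalso. apply wJ. exact (Jin K w sK xK aK yK (H w wB)).
              ** exfalso. apply (H x). auto.
           ++ right; right. intros v hv. apply h2. exists v. exact hv.
      * intro h. apply Jy. apply h, yA.
      * exists x. exact Jx.
      * intros K sK KA nK JK. intros v. split; [|apply JK].
        intro vK. destruct (classic (K y)) as [ky|ky].
        -- exfalso. apply nK. intro u. split; [apply KA|].
           intro uA. apply E in uA. apply uA; [exact sK|].
           intros t [->| ->]; auto.
        -- exact (Jin K v sK (JK x Jx) KA ky vK).
  - intros [SA [J [sJ [JA [nJ [[j jJ] mx]]]]]].
    assert (exists a, A a /\ ~ J a) as [a [aA aJ]].
    { apply NNPP. intro h. apply nJ. intro v. split; [apply JA|].
      intro vA. apply NNPP. intro vJ. apply h. exists v. auto. }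
    assert (nja : j <> a). { intros ->. auto. }
    split; [split; [exact (proj1 SA)|right; exists j, a; split; [exact nja|]]|].
    + set (S := S_M d (fun v => v = j \/ v = a)).
      assert (sS : strong_module d S) by apply SM_strong.
      assert (SsA : set_sub S A).
      { intros v hv. apply hv; [exact SA|]. intros t [->| ->]; auto. }
      assert (aS : S a). { intros B _ h. apply h. auto. }
      assert (jS : S j). { intros B _ h. apply h. auto. }
      assert (JS : set_sub J S).
      { destruct (proj2 sS J (proj1 sJ)) as [H|[H|H]].
        - exfalso. apply aJ, H, aS.
        - exact H.
        - exfalso. apply (H j). auto. }
      destruct (classic (set_eq S A)) as [h|h].
      * intro v. split; intro hv; [apply (proj2 (h v))|apply (proj1 (h v))]; exact hv.
      * exfalso. apply aJ. exact (proj1 (mx S sS SsA h JS a) aS).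
    + exists j, a. split; [exact nja|split; [apply JA, jJ|exact aA]].
Qed.
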